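(* Let $\mathbb{X}$ be a finite set, let $\mathcal{H}_A$ be a finite-dimensional Hilbert space, and let $\{\rho_A^x\}_{x\in\mathbb{X}}$ be density operators on $\mathcal{H}_A$ (the quantum encoding of a discrete random variable $X$ with probability mass function $p_X$ satisfying $p_X(x)>0$ for all $x\in\mathbb{X}$). Then \[ \mathcal{Q}(X\rightarrow A)_{\rho_A}\leq \min_{\pi\in\Delta(\mathbb{X})}\max_{x\in\mathbb{X}}\widetilde{D}_\infty\Big(\rho_A^x\,\Big\|\,\sum_{x'\in\mathbb{X}}\pi(x')\rho_A^{x'}\Big). \]
   Context: All logarithms are base 2. $\Delta(\mathbb{X})$ is the set of probability mass functions on $\mathbb{X}$. For a density operator $\rho$ and a positive semi-definite operator $\sigma$, $\widetilde{D}_\infty(\rho\|\sigma)=\log\big(\inf\{\mu\in\mathbb{R}:\rho\leq\mu\sigma\}\big)$ (operator inequality), with $\widetilde{D}_\infty(\rho\|\sigma)=+\infty$ if the support of $\rho$ is not contained in the support of $\sigma$. The maximal quantum leakage is \[ \mathcal{Q}(X\rightarrow A)_{\rho_A}=\sup_{\{F_y\}_{y\in\mathbb{Y}}}\log\Big(\sum_{y\in\mathbb{Y}}\max_{x\in\mathbb{X}}\operatorname{tr}(\rho_A^xF_y)\Big), \] where the supremum is over all POVMs $\{F_y\}_{y\in\mathbb{Y}}$ on $\mathcal{H}_A$ (positive semi-definite operators summing to the identity) with arbitrary finite outcome set $\mathbb{Y}$. *)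

(* Defs.v *)
From HB Require Import structures.
From mathcomp Require Import all_boot all_order all_algebra.
From mathcomp Require Import complex.
From mathcomp Require Import all_classical all_reals all_analysis.

Set Implicit Arguments.
Unset Strict Implicit.
Unset Printing Implicit Defensive.

Import Order.TTheory GRing.Theory Num.Theory.
Local Open Scope ring_scope.

(* Hilbert space H_A = C^n, C = R[i] (complex numbers over a real field R);
   operators are n x n complex matrices. *)

Definition log2 (R : realType) (x : R) : R := ln x / ln 2.

Definition adjmx (R : realType) (n : nat) (A : 'M[R[i]]_n) : 'M[R[i]]_n :=
  (map_mx Num.conj A)^T.

Definition psd (R : realType) (n : nat) (A : 'M[R[i]]_n) : Prop :=
  adjmx A = A /\
  forall v : 'cV[R[i]]_n, 0 <= ((map_mx Num.conj v)^T *m A *m v) 0 0.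

Definition density (R : realType) (n : nat) (rho : 'M[R[i]]_n) : Prop :=
  psd rho /\ \tr rho = 1.

Definition opleq (R : realType) (n : nat) (A B : 'M[R[i]]_n) : Prop :=
  psd (B - A).

Definition povm (R : realType) (n : nat) (Y : finType) (F : Y -> 'M[R[i]]_n) : Prop :=
  (forall y, psd (F y)) /\ \sum_(y : Y) F y = 1%:M.

(* support of A (its range = column space) contained in support of B *)
Definition supp_sub (R : realType) (n : nat) (A B : 'M[R[i]]_n) : bool :=
  (A^T <= B^T)%MS.

Definition Dmax (R : realType) (n : nat) (rho sigma : 'M[R[i]]_n) : \bar R :=
  if supp_sub rho sigma then
    (log2 (inf [set mu : R | opleq rho ((mu%:C)%C *: sigma)]))%:E
  else +oo%E.

Definition leak_val (R : realType) (n : nat) (X Y : finType)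
  (rho : X -> 'M[R[i]]_n) (F : Y -> 'M[R[i]]_n) : R :=
  log2 (\sum_(y : Y) \big[Num.max/0]_(x : X) complex.Re (\tr (rho x *m F y))).

Definition Qleak (R : realType) (n : nat) (X : finType) (rho : X -> 'M[R[i]]_n)
  : \bar R :=
  ereal_sup [set v : \bar R | exists (Y : finType) (F : Y -> 'M[R[i]]_n),
                 povm F /\ v = (leak_val rho F)%:E].

(* Main.v *)
Require Import Defs.
From HB Require Import structures.
From mathcomp Require Import all_boot all_order all_algebra.
From mathcomp Require Import complex.
From mathcomp Require Import all_classical all_reals all_analysis.
From mathcomp Require Import ring lra.
Import Order.TTheory GRing.Theory Num.Theory.
Local Open Scope ring_scope.
Set Implicit Arguments.
Unset Strict Implicit.
Unset Printing Implicit Defensive.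
Section Q.
Variable R : realType.
Local Notation C := (R[i]).

Definition ct m k (A : 'M[C]_(m, k)) : 'M[C]_(k, m) := (map_mx Num.conj A)^T.
Arguments ct {m k}.

Lemma ctE m k (A : 'M[C]_(m, k)) (i : 'I_k) (j : 'I_m) : ct A i j = Num.conj (A j i).
Proof. by rewrite !mxE. Qed.

Lemma ctK m k (A : 'M[C]_(m, k)) : ct (ct A) = A.
Proof. by apply/matrixP => i j; rewrite !ctE conjCK. Qed.

Lemma ct_mul m k l (A : 'M[C]_(m, k)) (B : 'M[C]_(k, l)) : ct (A *m B) = ct B *m ct A.
Proof. by rewrite /ct map_mxM trmx_mul. Qed.

Lemma adjmx_ct n (A : 'M[C]_n) : adjmx A = ct A.
Proof. by []. Qed.

Definition qf n (A : 'M[C]_n) (v : 'cV[C]_n) := (ct v *m A *m v) 0 0.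
Arguments qf {n}.

Lemma psd_qf n (A : 'M[C]_n) : psd A <-> (ct A = A /\ forall v, 0 <= qf A v).
Proof. by []. Qed.

Lemma qf_conj n (P X : 'M[C]_n) v : qf (ct P *m X *m P) v = qf X (P *m v).
Proof. by rewrite /qf ct_mul !mulmxA. Qed.

Lemma unitary_spec n (A : 'M[C]_n) : ct A = A ->
  exists (P : 'M[C]_n) (d : 'rV[C]_n), [/\ P *m ct P = 1%:M, ct P *m P = 1%:M & A = ct P *m diag_mx d *m P].
Proof.
move=> hA.
have nA : A \is normalmx.
  apply/normalmxP. by rewrite -map_trmx -/(ct A) hA.
have /orthomx_spectralP eA := nA.
have uP := spectral_unitarymx A.
have eP : map_mx Num.conj (spectralmx A)^T = ct (spectralmx A) by rewrite -map_trmx.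
exists (spectralmx A), (spectral_diag A).
have h1 : spectralmx A *m ct (spectralmx A) = 1%:M.
  by move/unitarymxP: uP; rewrite eP.
have h2 : invmx (spectralmx A) = ct (spectralmx A) by rewrite invmx_unitary // eP.
split => //.
  by rewrite -h2 mulVmx // spectral_unit.
by rewrite -h2.
Qed.

Lemma ct_row n (P : 'M[C]_n) i : ct (row i P) = col i (ct P).
Proof. by apply/matrixP => a b; rewrite !mxE. Qed.

Lemma diag_qf n (P X : 'M[C]_n) i : (P *m X *m ct P) i i = qf X (ct (row i P)).
Proof.
by rewrite /qf ctK ct_row -row_mul -row_mul colE mulmxA -colE !mxE.
Qed.

Lemma psd_diag n (B : 'M[C]_n) (P : 'M[C]_n) (d : 'rV[C]_n) : psd B -> P *m ct P = 1%:M ->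
  B = ct P *m diag_mx d *m P -> forall i, 0 <= d 0 i.
Proof.
move=> [_ hB] u eB i.
have : P *m B *m ct P = diag_mx d.
  by rewrite eB !mulmxA u mul1mx -!mulmxA u mulmx1.
move/matrixP => /(_ i i); rewrite diag_qf !mxE eqxx mulr1n => <-.
exact: hB.
Qed.

Lemma psd_trace_ge0 n (A B : 'M[C]_n) : psd A -> psd B -> 0 <= \tr (A *m B).
Proof.
move=> hA hB.
have [P [d [u1 u2 eB]]] := unitary_spec hB.1.
have hd := psd_diag hB u1 eB.
rewrite eB !mulmxA mxtrace_mulC !mulmxA /mxtrace.
apply: sumr_ge0 => i _; rewrite mul_mx_diag mxE.
apply: mulr_ge0 => //.
rewrite diag_qf; exact: hA.2.
Qed.
Lemma qfE n (A : 'M[C]_n) v :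
  qf A v = \sum_j \sum_i Num.conj (v i 0) * A i j * v j 0.
Proof.
rewrite /qf mxE; apply: eq_bigr => j _; rewrite mxE big_distrl.
by apply: eq_bigr => i _; rewrite !mxE.
Qed.

Lemma qf_lin n (A B : 'M[C]_n) (a : C) v : qf (a *: A - B) v = a * qf A v - qf B v.
Proof.
rewrite !qfE mulr_sumr -sumrB; apply: eq_bigr => j _.
rewrite mulr_sumr -sumrB; apply: eq_bigr => i _.
by rewrite !mxE; ring.
Qed.

Lemma ct_lin n (A B : 'M[C]_n) (a : C) : ct (a *: A - B) = Num.conj a *: ct A - ct B.
Proof. by apply/matrixP => i j; rewrite !mxE rmorphB rmorphM. Qed.

Lemma le_sum_term (I : finType) (F : I -> C) i :
  (forall j, 0 <= F j) -> F i <= \sum_j F j.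
Proof. by move=> h; rewrite (bigD1 i) //= lerDl sumr_ge0. Qed.

Lemma mul_le_sqr (x y : C) : 0 <= x -> 0 <= y -> x * y <= x ^+ 2 + y ^+ 2.
Proof.
move=> hx hy; have hx2 : 0 <= x ^+ 2 by rewrite expr2 mulr_ge0.
have hy2 : 0 <= y ^+ 2 by rewrite expr2 mulr_ge0.
case/orP: (ger_leVge hx hy) => h.
  apply: (le_trans (ler_wpM2r hy h)); rewrite -expr2 lerDr //.
apply: (le_trans (ler_wpM2l hx h)); rewrite -expr2 lerDl //.
Qed.

Lemma Re_real (z : C) : 0 <= z -> ((complex.Re z)%:C)%C = z.
Proof.
move=> hz; rewrite [in RHS](complexE z) (ger0_Im hz).
by rewrite mulr0 addr0.
Qed.

Lemma psd_dom n (rho sig : 'M[C]_n) : psd rho -> psd sig -> supp_sub rho sig ->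
  exists mu : R, opleq rho ((mu%:C)%C *: sig).
Proof.
move=> hr hs hsupp.
have [P [d [u1 u2 eS]]] := unitary_spec hs.1.
have hd := psd_diag hs u1 eS.
have [K eK] := submxP hsupp.
set K' := ct K^T.
have erho : rho = K' *m sig.
  have e1 : rho = sig *m K^T by rewrite -[rho]trmxK eK trmx_mul trmxK.
  by rewrite -[LHS]hr.1 adjmx_ct {1}e1 ct_mul (hs.1 : ct sig = sig).
set rho' := P *m rho *m ct P.
set E := P *m K' *m ct P.
have erho' : rho' = E *m diag_mx d.
  rewrite /rho' /E erho {1}eS !mulmxA.
  by rewrite -[P *m K' *m ct P *m diag_mx d *m P *m ct P]mulmxA u1 mulmx1.
have ehr : forall i j, rho' i j = Num.conj (rho' j i).
  have : ct rho' = rho' by rewrite /rho' !ct_mul ctK -adjmx_ct hr.1 mulmxA.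
  by move/matrixP => h i j; rewrite -[LHS]h ctE.
have r0 : forall i j, (d 0 i == 0) || (d 0 j == 0) -> rho' i j = 0.
  move=> i j /orP [] /eqP h0.
    by rewrite ehr erho' mul_mx_diag mxE h0 mulr0 rmorph0.
  by rewrite erho' mul_mx_diag mxE h0 mulr0.
have erhoback : rho = ct P *m rho' *m P.
  by rewrite /rho' !mulmxA u2 mul1mx -mulmxA u2 mulmx1.
set M := \sum_k \sum_l `|rho' k l|.
set s := \sum_k (if d 0 k == 0 then 0 else (d 0 k)^-1).
have M0 : 0 <= M by apply: sumr_ge0 => k _; apply: sumr_ge0.
have s0 : 0 <= s.
  apply: sumr_ge0 => k _; case: ifP => // _; rewrite invr_ge0; exact: hd.
set muC := M * (2 * n%:R * s).
have mu0 : 0 <= muC by rewrite mulr_ge0 // mulr_ge0 // mulr_ge0 // ler0n.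
exists (complex.Re muC); rewrite Re_real //.
split; first by rewrite adjmx_ct ct_lin geC0_conj // -!adjmx_ct hs.1 hr.1.
move=> v; rewrite -/(qf _ v) qf_lin subr_ge0.
set w := P *m v.
have eqs : qf sig v = qf (diag_mx d) w by rewrite eS qf_conj.
have eqr : qf rho v = qf rho' w by rewrite {1}erhoback qf_conj.
have qr0 : 0 <= qf rho' w by rewrite -eqr; exact: hr.2.
rewrite eqs eqr.
set a := fun i => if d 0 i == 0 then 0 else `|w i 0|.
have a0 : forall i, 0 <= a i by move=> i; rewrite /a; case: ifP.
have step1 : qf rho' w <= \sum_j \sum_i `|w i 0| * `|rho' i j| * `|w j 0|.
  rewrite -(ger0_norm qr0) qfE.
  apply: (le_trans (ler_norm_sum _ _ _)); apply: ler_sum => j _.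
  apply: (le_trans (ler_norm_sum _ _ _)); apply: ler_sum => i _.
  by rewrite !normrM norm_conjC.
have step2 : forall i j, `|w i 0| * `|rho' i j| * `|w j 0| <= M * (a i * a j).
  move=> i j; rewrite /a.
  case: (boolP ((d 0 i == 0) || (d 0 j == 0))) => hij.
    rewrite r0 // normr0 mulr0 mul0r; apply: mulr_ge0 => //.
    by case: ifP; case: ifP.
  move: hij; rewrite negb_or => /andP [/negbTE -> /negbTE ->].
  have -> : `|w i 0| * `|rho' i j| * `|w j 0| = `|rho' i j| * (`|w i 0| * `|w j 0|) by ring.
  apply: ler_wpM2r; first by rewrite mulr_ge0.
  apply: (@le_trans _ _ (\sum_l `|rho' i l|)).
    by apply: (le_sum_term (F := fun l => `|rho' i l|)) => l; rewrite normr_ge0.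
  by apply: (le_sum_term (F := fun k => \sum_l `|rho' k l|)) => k; apply: sumr_ge0 => l _; rewrite normr_ge0.
have step5 : forall i, a i ^+ 2 <= s * (Num.conj (w i 0) * d 0 i * w i 0).
  move=> i; rewrite /a; case: ifP => hi.
    rewrite expr0n /= (eqP hi) mulr0 mul0r mulr0 //.
  have di : 0 < d 0 i by rewrite lt_def hi hd.
  have hs1 : 1 <= s * d 0 i.
    have : (if d 0 i == 0 then 0 else (d 0 i)^-1) <= s.
      by apply: (le_sum_term (F := fun k => if d 0 k == 0 then 0 else (d 0 k)^-1) i) => k;
        case: ifP => // _; rewrite invr_ge0 hd.
    rewrite hi => h; rewrite -(mulVf (lt0r_neq0 di)).
    by apply: ler_wpM2r => //; exact: ltW.
  have -> : s * (Num.conj (w i 0) * d 0 i * w i 0) = (s * d 0 i) * `|w i 0| ^+ 2.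
    by rewrite normCK; ring.
  rewrite -[X in X <= _]mul1r; apply: ler_wpM2r => //.
have eqD : qf (diag_mx d) w = \sum_i Num.conj (w i 0) * d 0 i * w i 0.
  by rewrite /qf mul_mx_diag mxE; apply: eq_bigr => i _; rewrite !mxE.
rewrite eqD.
apply: (le_trans step1).
apply: (@le_trans _ _ (\sum_j \sum_i M * (a i ^+ 2 + a j ^+ 2))).
  apply: ler_sum => j _; apply: ler_sum => i _.
  apply: (le_trans (step2 i j)); apply: ler_wpM2l => //.
  exact: mul_le_sqr.
set S := \sum_i a i ^+ 2.
have -> : \sum_j \sum_i M * (a i ^+ 2 + a j ^+ 2) = M * (2 * n%:R * S).
  rewrite (eq_bigr (fun j => M * (S + a j ^+ 2 *+ n))); last first.
    by move=> j _; rewrite -mulr_sumr big_split /= sumr_const card_ord.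
  rewrite -mulr_sumr big_split /= sumr_const card_ord sumrMnl -/S.
  rewrite -mulr_natl; ring.
set Q := \sum_i _.
have -> : muC * Q = M * (2 * n%:R * (s * Q)) by rewrite /muC; ring.
apply: ler_wpM2l => //.
apply: ler_wpM2l; first by rewrite mulr_ge0 ?ler0n.
rewrite mulr_sumr; apply: ler_sum => i _; exact: step5.
Qed.
Lemma ReD (x y : C) : complex.Re (x + y) = complex.Re x + complex.Re y.
Proof. by case: x => a b; case: y. Qed.

Lemma Re_sum (I : Type) (r : seq I) (F : I -> C) :
  complex.Re (\sum_(i <- r) F i) = \sum_(i <- r) complex.Re (F i).
Proof. elim: r => [|a r IH]; by rewrite ?big_nil ?big_cons ?ReD ?IH. Qed.

Lemma ReM_real (c : R) (z : C) : complex.Re ((c%:C)%C * z) = c * complex.Re z.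
Proof. by case: z => a b /=; rewrite mul0r subr0. Qed.

Lemma Re_le (z w : C) : z <= w -> complex.Re z <= complex.Re w.
Proof. by rewrite lecE => /andP []. Qed.

Lemma Re_ge0 (z : C) : 0 <= z -> 0 <= complex.Re z.
Proof. exact: Re_le. Qed.

Lemma Re1 : complex.Re (1 : C) = 1.
Proof. by []. Qed.

Lemma conjM (x y : C) : Num.conj (x * y) = Num.conj x * Num.conj y.
Proof. exact: rmorphM. Qed.

Lemma psd1 n : psd (1%:M : 'M[C]_n).
Proof.
split; first by apply/matrixP => i j; rewrite !mxE eq_sym rmorph_nat.
move=> v; rewrite -/(qf _ v) /qf mulmx1 mxE; apply: sumr_ge0 => i _.
by rewrite !mxE mulrC mulcJ_ge0.
Qed.

Lemma ctZ_real n (c : R) (A : 'M[C]_n) : ct (((c%:C)%C) *: A) = ((c%:C)%C) *: ct A.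
Proof.
apply/matrixP => i j; rewrite !mxE rmorphM; congr (_ * _).
exact: conjc_real.
Qed.

Lemma ct_sum n (I : finType) (B : I -> 'M[C]_n) : ct (\sum_i B i) = \sum_i ct (B i).
Proof.
by apply/matrixP => a b; rewrite !mxE !summxE rmorph_sum; apply: eq_bigr => i _; rewrite !mxE.
Qed.

Lemma psd_sum n (I : finType) (c : I -> R) (A : I -> 'M[C]_n) :
  (forall i, 0 <= c i) -> (forall i, psd (A i)) ->
  psd (\sum_i ((c i)%:C)%C *: A i).
Proof.
move=> hc hA; split.
  rewrite adjmx_ct ct_sum; apply: eq_bigr => i _.
  by rewrite ctZ_real -adjmx_ct (hA i).1.
move=> v; rewrite -/(qf _ v).
have -> : qf (\sum_i ((c i)%:C)%C *: A i) v = \sum_i ((c i)%:C)%C * qf (A i) v.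
  rewrite /qf mulmx_sumr mulmx_suml summxE; apply: eq_bigr => i _.
  by rewrite -scalemxAr -scalemxAl mxE.
apply: sumr_ge0 => i _; apply: mulr_ge0; first by rewrite ler0c.
exact: (hA i).2.
Qed.

Lemma opleq_tr n (rho sig F : 'M[C]_n) (mu : R) : opleq rho ((mu%:C)%C *: sig) -> psd F ->
  complex.Re (\tr (rho *m F)) <= mu * complex.Re (\tr (sig *m F)).
Proof.
move=> h hF; have := psd_trace_ge0 h hF.
rewrite mulmxBl linearB /= -scalemxAl mxtraceZ subr_ge0 => /Re_le.
by rewrite ReM_real.
Qed.
End Q.
Unset Implicit Arguments.
Lemma argm (R : realType) (X : finType) (x1 : X) (m : X -> R) (m1 : forall x, 1 <= m x) :
  exists2 x0, true & forall x, m x <= m x0.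
Proof.
have [x0 _ e0] := @eq_bigmax _ _ X 0 x1 xpredT m isT (fun i _ => le_trans ler01 (m1 i)).
exists x0 => // x; rewrite -e0.
exact: le_bigmax_cond.
Qed.

Theorem proposition1 (R : realType) (X : finType) (n : nat)
  (pX : X -> R) (pX_pos : forall x, 0 < pX x) (pX_sum : \sum_(x : X) pX x = 1)
  (rho : X -> 'M[R[i]]_n) (rho_density : forall x, density (rho x))
  (pi : X -> R) (pi_ge0 : forall x, 0 <= pi x) (pi_sum : \sum_(x : X) pi x = 1) :
  (Qleak rho <=
     \big[maxe/-oo]_(x : X) Dmax (rho x) (\sum_(x' : X) ((pi x')%:C)%C *: rho x'))%E.
Proof.
set sig := \sum_(x' : X) ((pi x')%:C)%C *: rho x'.
have [x1 _] : exists x : X, true.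
  case: (pickP (fun _ : X => true)) => [x _|h]; first by exists x.
  move: pX_sum; rewrite big1 => [/esym/eqP|i _]; first by rewrite oner_eq0.
  by have := h i.
have hsig : psd sig := psd_sum pi_ge0 (fun x => (rho_density x).1).
have trsig : \tr sig = 1.
  rewrite /sig linear_sum /=.
  rewrite (eq_bigr (fun x => ((pi x)%:C)%C)) => [|x _]; last first.
    by rewrite mxtraceZ (rho_density x).2 mulr1.
  by rewrite -rmorph_sum pi_sum.
case: (boolP [forall x, supp_sub (rho x) sig]) => hall; last first.
  move: hall; rewrite negb_forall => /existsP [x hx].
  apply: (le_trans (leey _)).
  apply: (le_trans _ (le_bigmax _ _ x)).
  by rewrite /Dmax (negbTE hx).
set S := fun x => [set mu : R | opleq (rho x) (((mu%:C)%C) *: sig)]%classic.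
set m := fun x => inf (S x).
have Sne : forall x, (S x !=set0)%classic.
  move=> x; have [mu hmu] := psd_dom (rho_density x).1 hsig (forallP hall x).
  by exists mu.
have S1 : forall x mu, S x mu -> 1 <= mu.
  move=> x mu h; have := opleq_tr h (@psd1 R n).
  by rewrite !mulmx1 trsig (rho_density x).2 Re1 mulr1.
have m1 : forall x, 1 <= m x.
  by move=> x; apply: lb_le_inf (Sne x) _ => mu hmu; exact: S1 hmu.
have Km : forall x A, psd A ->
    complex.Re (\tr (rho x *m A)) <= m x * complex.Re (\tr (sig *m A)).
  move=> x A hA.
  have t0 : 0 <= complex.Re (\tr (sig *m A)) := Re_ge0 (psd_trace_ge0 hsig hA).
  case: (eqVneq (complex.Re (\tr (sig *m A))) 0) => ht.
    have [mu hmu] := Sne x; have := opleq_tr hmu hA.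
    by rewrite ht !mulr0.
  have tp : 0 < complex.Re (\tr (sig *m A)) by rewrite lt_def ht t0.
  rewrite -ler_pdivrMr //.
  apply: lb_le_inf (Sne x) _ => mu hmu.
  rewrite ler_pdivrMr //; exact: opleq_tr hmu hA.
have [x0 _ hx0] : exists2 x0, true & forall x, m x <= m x0.
  exact: (@argm R X x1 m m1).
apply: ge_ereal_sup => _ [Y [F [hF ->]]].
apply: (le_trans _ (le_bigmax _ _ x0)).
rewrite /Dmax (forallP hall x0) lee_fin -/(S x0) -/(m x0).
rewrite /leak_val /log2.
have trF : forall A : 'M[R[i]]_n, \sum_y \tr (A *m F y) = \tr A.
  by move=> A; rewrite -linear_sum /= -mulmx_sumr hF.2 mulmx1.
set Sum := \sum_y _.
have Sum1 : 1 <= Sum.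
  apply: (@le_trans _ _ (\sum_y complex.Re (\tr (rho x1 *m F y)))).
    by rewrite -Re_sum trF (rho_density x1).2 Re1.
  apply: ler_sum => y _.
  exact: (le_bigmax _ (fun x => complex.Re (\tr (rho x *m F y))) x1).
have Summ : Sum <= m x0.
  apply: (@le_trans _ _ (\sum_y m x0 * complex.Re (\tr (sig *m F y)))).
    apply: ler_sum => y _; apply: bigmax_le.
      apply: mulr_ge0; first exact: le_trans ler01 (m1 x0).
      exact: Re_ge0 (psd_trace_ge0 hsig (hF.1 y)).
    move=> x _; apply: (le_trans (Km x _ (hF.1 y))); apply: ler_wpM2r.
      exact: Re_ge0 (psd_trace_ge0 hsig (hF.1 y)).
    exact: hx0.
  by rewrite -mulr_sumr -Re_sum trF trsig Re1 mulr1.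
apply: ler_wpM2r; first by rewrite invr_ge0 ltW // ln_gt0 // ltr1n.
rewrite ler_ln ?posrE //.
  exact: lt_le_trans ltr01 Sum1.
exact: lt_le_trans ltr01 (m1 x0).
Qed.
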